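(* Let $p$ be a prime, $m$ a positive integer, $q=p^m$, and let $l,s$ be positive integers with $q-1=ls$; let $r$ be a positive integer. Let $\gamma$ be a primitive element of $\mathbb{F}_q$, $\xi=\gamma^s$, $f\in\mathbb{F}_q[x]$, and $A_i=f(\xi^i)$ for $0\le i\le l-1$. If $P(x)=x^rf(x^s)$ is a permutation polynomial of $\mathbb{F}_q$, then $l \mid 2\,\mathrm{Ind}_\gamma(A_0A_1\cdots A_{l-1})$.
   Context: A permutation polynomial of $\mathbb{F}_q$ is a polynomial inducing a bijection $\mathbb{F}_q\to\mathbb{F}_q$. For nonzero $a\in\mathbb{F}_q$, $\mathrm{Ind}_\gamma(a)$ denotes the residue class $b \bmod (q-1)$ with $a=\gamma^b$; since $l\mid q-1$, divisibility of $\mathrm{Ind}_\gamma(a)$ (or of a multiple of it) by $l$ is well defined. (When $P$ is a permutation polynomial all $A_i$ are nonzero, so the index is defined.) *)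

(* Defs.v *)
From HB Require Import structures.
From mathcomp Require Import all_boot all_order all_algebra all_field.
Set Implicit Arguments. Unset Strict Implicit. Unset Printing Implicit Defensive.
Import GRing.Theory.
Local Open Scope ring_scope.

Definition primitive_elt (F : finFieldType) (g : F) : bool :=
  (#|F|.-1).-primitive_root g.

(* Ind_g(a): the least b in [0, q-1) with g ^+ b = a (the canonical
   representative of the residue class mod q-1). *)
Definition Ind (F : finFieldType) (g a : F) : nat :=
  find (fun b : nat => g ^+ b == a) (iota 0 (#|F|.-1)).

Definition perm_poly (F : finFieldType) (P : {poly F}) : Prop :=
  bijective (fun x : F => P.[x]).

(* Main.v *)
Require Import Defs.
From HB Require Import structures.
From mathcomp Require Import all_boot all_order all_algebra all_field.
Import GRing.Theory.
Local Open Scope ring_scope.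

Lemma prod_periodic (R : comNzRingType) (G : nat -> R) l n :
  (forall k, G (k + l)%N = G k) ->
  \prod_(0 <= k < l * n) G k = (\prod_(0 <= i < l) G i) ^+ n.
Proof.
move=> per.
have perm : forall j i, G (i + l * j)%N = G i.
  elim=> [|j IH] i; first by rewrite muln0 addn0.
  by rewrite mulnS addnA IH per.
elim: n => [|n IH]; first by rewrite muln0 big_geq.
rewrite mulnSr (@big_cat_nat _ _ _ (l * n)) ?leq_addr //= IH exprSr.
congr (_ * _).
rewrite -{1}(add0n (l * n)%N) big_addn addKn.
by apply: eq_bigr => i _; rewrite perm.
Qed.

Lemma nz_pow1 (F : finFieldType) (x : F) : x != 0 -> x ^+ #|F|.-1 = 1.
Proof.
move=> xn0; have := expf_card x.
have cF : #|F| = (#|F|.-1).+1 by rewrite prednK // (cardD1 0).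
rewrite {1}cF exprSr => h; apply: (mulIf xn0); by rewrite h mul1r.
Qed.

Lemma prod_nz_index (F : finFieldType) (g : F) (H : F -> F) :
  primitive_elt g ->
  \prod_(x : F | x != 0) H x = \prod_(k < #|F|.-1) H (g ^+ k).
Proof.
move=> pg; set n := #|F|.-1.
rewrite -(big_mkord xpredT (fun k => H (g ^+ k))) /index_iota subn0 -(big_map (fun k => g ^+ k) xpredT) -[LHS]big_filter.
apply: perm_big; apply: uniq_perm.
- by rewrite filter_uniq // index_enum_uniq.
- rewrite map_inj_in_uniq ?iota_uniq // => i j; rewrite !mem_iota !add0n => ii jj /eqP.
  by rewrite (eq_prim_root_expr pg) !modn_small // => /eqP.
move=> x; rewrite mem_filter mem_index_enum andbT.
apply/idP/mapP.
- move=> xn0; have [i ->] := prim_rootP pg (@nz_pow1 _ x xn0).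
  by exists (nat_of_ord i); rewrite // mem_iota add0n ltn_ord.
- move=> [k _ ->]; rewrite expf_neq0 //; apply/eqP => g0.
  have := prim_expr_order pg; rewrite g0 expr0n eqn0Ngt (prim_order_gt0 pg) /=.
  by move/eqP; rewrite eq_sym oner_eq0.
Qed.

Lemma prod_nz_inj (F : finFieldType) (h : F -> F) :
  injective h -> h 0 = 0 ->
  \prod_(x : F | x != 0) h x = \prod_(x : F | x != 0) x.
Proof.
move=> ih h0; rewrite [RHS](reindex_inj ih); apply: eq_bigl => x /=.
by rewrite -{2}h0 (inj_eq ih).
Qed.

Theorem theorem2p1 (F : finFieldType) (p m l s r : nat) (g : F) (f : {poly F}) :
  prime p -> (0 < m)%N -> #|F| = (p ^ m)%N ->
  (0 < l)%N -> (0 < s)%N -> (#|F|.-1 = l * s)%N -> (0 < r)%N ->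
  primitive_elt g ->
  perm_poly ('X^r * (f \Po 'X^s)) ->
  (l %| 2 * Ind g (\prod_(i < l) f.[(g ^+ s) ^+ i])%R)%N.
Proof.
move=> _ _ _ l0 s0 hn r0 pg [h hK Kh].
set P := ('X^r * (f \Po 'X^s)).
have Pe : forall x, P.[x] = x ^+ r * f.[x ^+ s].
  by move=> x; rewrite /P hornerM hornerXn horner_comp hornerXn.
set W := \prod_(x : F | x != 0) x.
have W0 : W != 0 by apply/prodf_neq0.
have WW : W * W = 1.
  have WV : W = W^-1.
    rewrite /W -prodfV; symmetry; apply: prod_nz_inj; [exact: invr_inj | exact: invr0].
  by rewrite {1}WV mulVf.
have E1 : \prod_(x : F | x != 0) P.[x] = W.
  apply: prod_nz_inj; first exact: (can_inj hK).
  by rewrite Pe expr0n gtn_eqF // mul0r.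
set Bv := \prod_(x : F | x != 0) f.[x ^+ s].
have E2 : W = W ^+ r * Bv.
  rewrite -{1}E1 /Bv /W -prodrXl -big_split /=. apply: eq_bigr => x _; by rewrite Pe.
have B2 : Bv ^+ 2 = 1.
  have H : Bv ^+ 2 * (W ^+ r) ^+ 2 = 1.
    by rewrite -exprMn mulrC -E2 expr2.
  by rewrite -exprM (mulnC r 2) exprM (expr2 W) WW expr1n mulr1 in H.
set A := \prod_(i < l) f.[(g ^+ s) ^+ i].
have BA : Bv = A ^+ s.
  rewrite /Bv (@prod_nz_index _ g) // hn.
  rewrite -(big_mkord xpredT (fun k => f.[(g ^+ k) ^+ s])).
  under eq_bigr => k _ do rewrite -exprM mulnC exprM.
  rewrite prod_periodic /A ?big_mkord // => k.
  rewrite exprD -(exprM g s l) (mulnC s l) -hn (prim_expr_order pg) mulr1 //.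
have A2 : A ^+ (s * 2) = 1 by rewrite exprM -BA.
have A0 : A != 0.
  apply/eqP => A0; move: A2; rewrite A0 expr0n muln_eq0 (gtn_eqF s0) /=.
  by move/eqP; rewrite eq_sym oner_eq0.
have [i Ai] := prim_rootP pg (@nz_pow1 _ A A0).
have hasA : has (fun b : nat => g ^+ b == A) (iota 0 #|F|.-1).
  by apply/hasP; exists (nat_of_ord i); rewrite ?mem_iota ?add0n ?ltn_ord // Ai.
have := nth_find 0 hasA; rewrite -/(Ind g A).
move: (hasA); rewrite has_find size_iota => lt.
rewrite nth_iota // add0n => /eqP gI.
have : (#|F|.-1 %| Ind g A * (s * 2))%N.
  by rewrite (prim_order_dvd pg) exprM gI A2.
by rewrite hn (mulnC s 2) mulnA (mulnC _ 2) (dvdn_pmul2r s0).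
Qed.
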